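(* Let $A\in\mathbb{R}^{d\times d}$ be such that $\mathbf{I}_d-A$ is invertible, set $B:=(\mathbf{I}_d-A)^{-1}$, let $\mu_0,\mu_1\in\mathbb{R}^d$, $\sigma_0,\sigma_1>0$, and $D\in\mathbb{R}^{d\times d}$ a diagonal matrix with positive diagonal entries. Consider the structural causal model $\mathbf{X}_s=\mu_s+A\mathbf{X}_s+\epsilon_s$ with $\epsilon_s\sim\mathcal{N}(0,\sigma_s^2D)$, $s\in\{0,1\}$, so that $\mathbf{X}_s\sim\mathcal{N}(B\mu_s,\sigma_s^2BDB^\top)$. For a realization $\mathbf{x}_s$ of $\mathbf{X}_s$, let $\tilde{\mathbf{x}}^{\mathrm{OT}}_s$ be its image under the optimal transport map (for squared Euclidean cost) from the distribution of $\mathbf{X}_s$ to that of $\mathbf{X}_{s'}$, $s'=1-s$; this map has the form $\mathbf{x}\mapsto B\mu_{s'}+\mathbf{W}_s(\mathbf{x}-B\mu_s)$ for a matrix $\mathbf{W}_s\in\mathbb{R}^{d\times d}$. Then $\mathbf{W}_s=\sigma_{s'}\sigma_s^{-1}\mathbf{I}_d$, and consequently $\tilde{\mathbf{x}}^{\mathrm{OT}}_s=\tilde{\mathbf{x}}^{\mathrm{CF}}_s$.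
   Context: The counterfactual of $\mathbf{x}_s$ is obtained by recovering the noise $\epsilon_s=B^{-1}\mathbf{x}_s-\mu_s$, rescaling it to the other group ($\sigma_{s'}^{-1}(B^{-1}\tilde{\mathbf{x}}-\mu_{s'})=\sigma_s^{-1}(B^{-1}\mathbf{x}_s-\mu_s)$), which gives $\tilde{\mathbf{x}}^{\mathrm{CF}}_s=B\mu_{s'}+\sigma_{s'}\sigma_s^{-1}(\mathbf{x}_s-B\mu_s)$. The optimal transport map from $\mathcal{Q}_1$ to $\mathcal{Q}_2$ is the map $\mathbf{T}$ with $\mathbf{T}_{\#}\mathcal{Q}_1=\mathcal{Q}_2$ minimizing $\mathbb{E}_{\mathbf{X}\sim\mathcal{Q}_1}\|\mathbf{X}-\mathbf{T}(\mathbf{X})\|^2$. *)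

(* Defs.v *)
From HB Require Import structures.
From mathcomp Require Import all_boot all_order all_algebra.
From mathcomp Require Import all_classical all_reals all_analysis.
From mathcomp Require Import normal_distribution.

Set Implicit Arguments.
Unset Strict Implicit.
Unset Printing Implicit Defensive.

Import Order.TTheory GRing.Theory Num.Theory.
Local Open Scope classical_set_scope.
Local Open Scope ring_scope.

Section gaussian_ot.
Context {R : realType} {n : nat}.
Context {d : measure_display} {Omega : measurableType d}.
Variable P : probability Omega R.

Definition lin (u x : 'cV[R]_n) : R := \sum_(i < n) u i 0 * x i 0.

Definition quad (S : 'M[R]_n) (u : 'cV[R]_n) : R :=
  \sum_(i < n) \sum_(j < n) u i 0 * S i j * u j 0.

Definition sqdist (x y : 'cV[R]_n) : R := \sum_(i < n) (x i 0 - y i 0) ^+ 2.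

Definition rvec (X : Omega -> 'cV[R]_n) : Prop :=
  forall i : 'I_n, measurable_fun setT (fun w => X w i 0).

(* X ~ N(m, S) (multivariate normal, Cramer-Wold definition): every
   linear functional u^T X is N(u^T m, u^T S u), where a variance-0
   normal is the point mass at the mean. *)
Definition gaussian_vec (X : Omega -> 'cV[R]_n) (m : 'cV[R]_n) (S : 'M[R]_n)
  : Prop :=
  rvec X /\
  forall u : 'cV[R]_n,
    (0 < quad S u ->
       forall A : set R, measurable A ->
         P ((fun w => lin u (X w)) @^-1` A) =
         normal_prob (lin u m) (Num.sqrt (quad S u)) A) /\
    (quad S u = 0 -> P [set w | lin u (X w) = lin u m] = 1%E).

(* equality of the laws of two random vectors on R^n
   (through all one-dimensional projections, Cramer-Wold) *)
Definition same_law (Y Z : Omega -> 'cV[R]_n) : Prop :=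
  rvec Y /\ rvec Z /\
  forall (u : 'cV[R]_n) (A : set R), measurable A ->
    P ((fun w => lin u (Y w)) @^-1` A) = P ((fun w => lin u (Z w)) @^-1` A).

Definition transport_cost (X : Omega -> 'cV[R]_n) (T : 'cV[R]_n -> 'cV[R]_n)
  : \bar R :=
  (\int[P]_w (sqdist (X w) (T (X w)))%:E)%E.

Definition is_OT_map (X Y : Omega -> 'cV[R]_n) (T : 'cV[R]_n -> 'cV[R]_n)
  : Prop :=
  same_law (T \o X) Y /\
  forall S : 'cV[R]_n -> 'cV[R]_n, same_law (S \o X) Y ->
    (transport_cost X T <= transport_cost X S)%E.

End gaussian_ot.

(* Main.v *)
Require Import Defs.
From HB Require Import structures.
From mathcomp Require Import all_boot all_order all_algebra.
From mathcomp Require Import all_classical all_reals all_analysis.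
From mathcomp Require Import normal_distribution measurable_realfun charge.
From mathcomp Require Import ring lra.
Set Implicit Arguments.
Unset Strict Implicit.
Unset Printing Implicit Defensive.

Import Order.TTheory GRing.Theory Num.Theory.
Local Open Scope classical_set_scope.
Local Open Scope ring_scope.
Local Open Scope ereal_scope.
Section NA.
Context {R : realType}.
Notation leb := (@lebesgue_measure R).

Lemma normal_integral_ge0 (m s : R) (f : R -> \bar R) : s != 0%R ->
  measurable_fun [set: R] f -> (forall x, 0 <= f x) ->
  \int[normal_prob m s]_x f x = \int[leb]_x (f x * (normal_pdf m s x)%:E).
Proof.
move=> s0 mf f0.
have dom := normal_prob_dominates m s.
rewrite -(Radon_Nikodym_SigmaFinite.change_of_variables dom) //.
have iRN := Radon_Nikodym_SigmaFinite.f_integrable dom.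
apply: ae_eq_integral => //.
- apply: emeasurable_funM => //; exact: measurable_int iRN.
- apply: emeasurable_funM => //; apply/measurable_EFinP; exact: measurable_normal_pdf.
apply: ae_eqe_mul2l; apply: integral_ae_eq => //.
- by apply/measurable_EFinP; exact: measurable_normal_pdf.
move=> E _ mE; by rewrite -Radon_Nikodym_SigmaFinite.f_integral.
Qed.
End NA.
Local Close Scope ereal_scope.
Section NB.
Context {R : realType}.
Notation leb := (@lebesgue_measure R).

Lemma sq_pdf_le (s x : R) : s != 0%R ->
  (x ^+ 2 * normal_pdf 0 s x <=
   (normal_peak s * (s ^+ 2 *+ 8) / normal_peak (s *+ 2)) * normal_pdf 0 (s *+ 2) x)%R.
Proof.
move=> s0.
have s20 : s *+ 2 != 0%R by rewrite mulrn_eq0 negb_or s0.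
rewrite (normal_pdfE _ s0) (normal_pdfE _ s20) /normal_fun !subr0.
have pk0 := normal_peak_gt0 s20.
set t := (x ^+ 2 / (s ^+ 2 *+ 8))%R.
have t0 : (0 <= t)%R by apply: divr_ge0; [exact: sqr_ge0 | apply: mulrn_wge0; exact: sqr_ge0].
have ss : (0 < s ^+ 2)%R by rewrite exprn_even_gt0.
have E1 : (- x ^+ 2 / (s ^+ 2 *+ 2) = (- (t *+ 3)) + - t)%R.
  rewrite /t; field; exact: s0.
have E2 : (- x ^+ 2 / ((s *+ 2) ^+ 2 *+ 2) = - t)%R.
  rewrite /t; field; exact: s0.
have Ex : (x ^+ 2 = s ^+ 2 *+ 8 * t)%R.
  rewrite /t; field; exact: s0.
rewrite E1 E2 expRD.
have H3 : (t * expR (- (t *+ 3)) <= 1)%R.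
  rewrite expRN ler_pdivrMr ?expR_gt0 // mul1r.
  apply: (le_trans _ (expR_ge1Dx _)).
  lra.
have -> : (normal_peak s * (s ^+ 2 *+ 8) / normal_peak (s *+ 2) *
   (normal_peak (s *+ 2) * expR (- t)) = normal_peak s * (s ^+ 2 *+ 8) * expR (- t))%R.
  by field; rewrite gt_eqF.
rewrite Ex.
have hp := normal_peak_ge0 s.
have e1 := expR_gt0 (- t).
have h8 : (0 <= normal_peak s * (s ^+ 2 *+ 8) * expR (- t))%R.
  apply: mulr_ge0; last exact: ltW.
  apply: mulr_ge0 => //; apply: mulrn_wge0; exact: ltW.
have H3' : (0 <= 1 - t * expR (t *- 3))%R by rewrite subr_ge0.
have := mulr_ge0 h8 H3'.
move=> hh. nra.
Qed.

End NB.
Section NC.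
Context {R : realType}.
Notation leb := (@lebesgue_measure R).
Local Open Scope ereal_scope.

Lemma normal_sq_integrable (s : R) : s != 0%R ->
  (normal_prob 0 s).-integrable [set: R] (fun x => (x ^+ 2)%:E).
Proof.
move=> s0; apply/integrableP; split.
  apply/measurable_EFinP; exact: exprn_measurable.
set K := (normal_peak s * (s ^+ 2 *+ 8) / normal_peak (s *+ 2))%R.
have s20 : (s *+ 2 != 0)%R by rewrite mulrn_eq0 negb_or s0.
under eq_integral => x _ do rewrite gee0_abs ?lee_fin ?sqr_ge0 //.
rewrite normal_integral_ge0 //; last first.
- by move=> x; rewrite lee_fin sqr_ge0.
- apply/measurable_EFinP; exact: exprn_measurable.
apply: (@le_lt_trans _ _ (\int[leb]_x (K%:E * (normal_pdf 0 (s *+ 2) x)%:E))).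
  apply: ge0_le_integral => //.
  - by move=> x _; rewrite -EFinM lee_fin mulr_ge0 ?sqr_ge0 ?normal_pdf_ge0.
  - apply/measurable_EFinP; apply: measurable_funM; first exact: exprn_measurable.
    exact: measurable_normal_pdf.
  - apply/measurable_EFinP; apply: measurable_funM => //.
    exact: measurable_normal_pdf.
  - by move=> x _; rewrite -!EFinM lee_fin sq_pdf_le.
rewrite integralZl //; last exact: integrable_normal_pdf.
by rewrite integral_normal_pdf mule1 ltry.
Qed.
End NC.
Section PR.
Context {R : realType} {d : measure_display} {Omega : measurableType d}.
Variable P : probability Omega R.
Local Open Scope ereal_scope.

Lemma law_transfer (Z1 Z2 : Omega -> R) (g : R -> R) :
  measurable_fun setT Z1 -> measurable_fun setT Z2 -> measurable_fun [set: R] g ->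
  (forall A, measurable A -> P (Z1 @^-1` A) = P (Z2 @^-1` A)) ->
  P.-integrable setT (fun w => (g (Z2 w))%:E) ->
  (P.-integrable setT (fun w => (g (Z1 w))%:E)) /\
  (\int[P]_w (g (Z1 w))%:E = \int[P]_w (g (Z2 w))%:E).
Proof.
move=> m1 m2 mg hl i2.
have mEg : measurable_fun [set: R] (fun x => (g x)%:E) by exact/measurable_EFinP.
have eqm : forall A, measurable A -> A `<=` setT ->
   pushforward P Z1 A = pushforward P Z2 A by move=> A mA _; exact: hl.
have i1 : P.-integrable setT (fun w => (g (Z1 w))%:E).
  apply/integrableP; split.
    by apply/measurable_EFinP; exact: measurableT_comp.
  have [_] := integrableP _ _ _ i2.
  have mab : measurable_fun [set: R] (fun x => `|(g x)%:E|).
    exact: measurableT_comp.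
  rewrite -[X in X < _ -> _](@ge0_integral_pushforward _ _ _ _ _ _ m2 P setT (fun x => `|(g x)%:E|)) //.
  rewrite -(eq_measure_integral _ eqm).
  by rewrite (@ge0_integral_pushforward _ _ _ _ _ _ m1 P setT (fun x => `|(g x)%:E|)).
  exact: m2.
split => //.
rewrite -[LHS](@integral_pushforward _ _ _ _ _ _ m1 P setT (fun x => (g x)%:E)) //.
rewrite -[RHS](@integral_pushforward _ _ _ _ _ _ m2 P setT (fun x => (g x)%:E)) //.
exact: eq_measure_integral.
Qed.

Lemma law_sq_integrable (Z : Omega -> R) (s : R) : s != 0%R -> measurable_fun setT Z ->
  (forall A, measurable A -> P (Z @^-1` A) = normal_prob 0 s A) ->
  P.-integrable setT (fun w => (Z w ^+ 2)%:E).
Proof.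
move=> s0 mZ hl.
pose ZL : Omega -> measurableTypeR R := Z.
have mZL : measurable_fun setT ZL by exact: mZ.
have eqm : forall A, measurable A -> A `<=` setT ->
   pushforward P ZL A = normal_prob 0 s A by move=> A mA _; exact: (hl A mA).
apply/integrableP; split.
  by apply/measurable_EFinP; apply: measurable_funX.
have mab : measurable_fun [set: measurableTypeR R] (fun x : R => `|(x ^+ 2)%:E|).
  apply: measurableT_comp => //; apply/measurable_EFinP; exact: exprn_measurable.
rewrite -(@ge0_integral_pushforward _ _ _ _ _ _ mZL P setT (fun x => `|(x ^+ 2)%:E|)) //.
rewrite (eq_measure_integral _ eqm).
have [_] := integrableP _ _ _ (normal_sq_integrable s0). move=> h. exact h.
exact: mZL.
Qed.
End PR.
Section LA.
Context {R : realType} {n : nat}.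
Implicit Types (u v x y : 'cV[R]_n) (M : 'M[R]_n).

Lemma linD u x y : lin u (x + y) = lin u x + lin u y.
Proof. by rewrite /lin -big_split; apply: eq_bigr => i _; rewrite mxE mulrDr. Qed.

Lemma linN u x : lin u (- x) = - lin u x.
Proof. by rewrite /lin -sumrN; apply: eq_bigr => i _; rewrite mxE mulrN. Qed.

Lemma linB u x y : lin u (x - y) = lin u x - lin u y.
Proof. by rewrite linD linN. Qed.

Lemma linZ u k x : lin u (k *: x) = k * lin u x.
Proof. by rewrite /lin mulr_sumr; apply: eq_bigr => i _; rewrite mxE mulrCA. Qed.

Lemma linZl u k x : lin (k *: u) x = k * lin u x.
Proof. by rewrite /lin mulr_sumr; apply: eq_bigr => i _; rewrite mxE mulrA. Qed.

Lemma lin0l x : lin 0 x = 0.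
Proof. by rewrite /lin big1 // => i _; rewrite mxE mul0r. Qed.

Lemma lin0r u : lin u 0 = 0.
Proof. by rewrite /lin big1 // => i _; rewrite mxE mulr0. Qed.

Lemma lin_mulmx u M x : lin u (M *m x) = lin (M^T *m u) x.
Proof.
rewrite /lin.
under eq_bigr do rewrite mxE mulr_sumr.
rewrite exchange_big /=; apply: eq_bigr => j _.
rewrite !mxE mulr_suml; apply: eq_bigr => i _.
by rewrite mxE mulrA [u i 0 * _]mulrC.
Qed.

Lemma lin_delta (i : 'I_n) x : lin (delta_mx i 0) x = x i 0.
Proof.
rewrite /lin (bigD1 i) //= big1 ?addr0; first by rewrite mxE !eqxx mul1r.
by move=> j ji; rewrite mxE (negbTE ji) mul0r.
Qed.

Definition qD (D : 'M[R]_n) u := \sum_(i < n) u i 0 ^+ 2 * D i i.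

Lemma quad_diag k (D : 'M[R]_n) u : is_diag_mx D ->
  quad (k *: D) u = k * qD D u.
Proof.
move=> /is_diag_mxP hD; rewrite /quad /qD mulr_sumr; apply: eq_bigr => i _.
rewrite (bigD1 i) //= big1 ?addr0.
  by rewrite mxE expr2; ring.
by move=> j ji; rewrite mxE hD ?mulr0 ?mul0r // eq_sym.
Qed.

Lemma qD_gt0 (D : 'M[R]_n) u : (forall i, 0 < D i i) -> u != 0 -> 0 < qD D u.
Proof.
move=> hD u0.
have [i ui] : exists i, u i 0 != 0.
  apply/existsP; apply: contraR u0 => /existsPn h; apply/eqP/matrixP => i j.
  by rewrite (ord1 j) mxE; have := h i; rewrite negbK => /eqP.
rewrite /qD (bigD1 i) //=; apply: ltr_pwDl.
  by apply: mulr_gt0 => //; rewrite exprn_even_gt0.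
by apply: sumr_ge0 => j _; apply: mulr_ge0; [exact: sqr_ge0 | exact: ltW].
Qed.

Lemma qD_scale (D : 'M[R]_n) k u : qD D (k *: u) = k ^+ 2 * qD D u.
Proof. by rewrite /qD mulr_sumr; apply: eq_bigr => i _; rewrite mxE; ring. Qed.

End LA.
Section GS.
Context {R : realType} {d : measure_display} {Omega : measurableType d}.
Variable P : probability Omega R.
Local Open Scope ereal_scope.

Lemma cst_integrable (k : R) : P.-integrable setT (fun _ => k%:E).
Proof. exact: finite_measure_integrable_cst. Qed.

Lemma poly_integrable (Z : Omega -> R) (k0 k1 k2 : R) :
  measurable_fun setT Z -> P.-integrable setT (fun w => (Z w ^+ 2)%:E) ->
  P.-integrable setT (fun w => (k0 + k1 * Z w + k2 * Z w ^+ 2)%:E).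
Proof.
move=> mZ iZ2.
have i1 : P.-integrable setT (fun w => (1 + Z w ^+ 2)%:E).
  rewrite /=; under eq_fun do rewrite EFinD.
  exact: (integrableD _ (cst_integrable 1) iZ2).
have iZ : P.-integrable setT (fun w => (Z w)%:E).
  apply: (le_integrable _ _ _ i1) => //; first exact/measurable_EFinP.
  move=> w _; rewrite !abse_EFin lee_fin.
  rewrite [X in (_ <= X)%R]ger0_norm; last by rewrite addr_ge0 ?sqr_ge0.
  have e : (Z w ^+ 2 = `|Z w| ^+ 2)%R by rewrite real_normK ?num_real.
  rewrite e; have := normr_ge0 (Z w); have := sqr_ge0 (`|Z w| - 1)%R. nra.
under eq_fun do rewrite !EFinD !EFinM.
apply: integrableD => //; first apply: integrableD => //.
- exact: cst_integrable.
- exact: integrableZl.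
- exact: integrableZl.
Qed.
End GS.
Section GV.
Context {R : realType} {n : nat} {d : measure_display} {Omega : measurableType d}.
Variable P : probability Omega R.
Local Open Scope ereal_scope.

Lemma lin_meas (E : Omega -> 'cV[R]_n) v : rvec E ->
  measurable_fun setT (fun w => lin v (E w)).
Proof.
move=> hr; rewrite /lin; apply: measurable_sum => i.
by apply: measurable_funM => //; exact: hr.
Qed.

Variables (D : 'M[R]_n) (E : Omega -> 'cV[R]_n) (sg : R).
Hypotheses (hD : is_diag_mx D) (hDp : forall i, (0 < D i i)%R) (hsg : (0 < sg)%R)
  (hE : gaussian_vec P E 0 (sg ^+ 2 *: D)).

Lemma gauss_law (v : 'cV[R]_n) : (v != 0)%R ->
  (Num.sqrt (sg ^+ 2 * qD D v) != 0)%R /\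
  forall A, measurable A -> P ((fun w => lin v (E w)) @^-1` A) =
     normal_prob 0 (Num.sqrt (sg ^+ 2 * qD D v)) A.
Proof.
move=> v0.
have q0 : (0 < sg ^+ 2 * qD D v)%R.
  by apply: mulr_gt0; [rewrite exprn_gt0 | exact: qD_gt0].
split; first by rewrite gt_eqF // sqrtr_gt0.
move=> A mA; have [_ h] := hE; have [h1 _] := h v.
by rewrite h1 ?quad_diag // lin0r.
Qed.

Lemma gauss_sq (v : 'cV[R]_n) : P.-integrable setT (fun w => (lin v (E w) ^+ 2)%:E).
Proof.
have [->|v0] := eqVneq v 0%R.
  under eq_fun do rewrite lin0l expr0n /=.
  exact: cst_integrable.
have [s0 hl] := gauss_law v0.
apply: (law_sq_integrable s0) => //.
by apply: lin_meas; case: hE.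
Qed.
End GV.
Definition hfun {R : realType} (c a b z : R) : R :=
  (1 - c^-1) * (z - b) ^+ 2 - 2 * (a - b) * (z - b).

Section CORE.
Context {R : realType} {d : measure_display} {Omega : measurableType d}.
Variable P : probability Omega R.
Local Open Scope ereal_scope.

Lemma eqi (f g : Omega -> \bar R) : P.-integrable setT f -> (forall w, f w = g w) ->
  P.-integrable setT g.
Proof. by move=> hf e; apply: (eq_integrable _ f) => // w _; exact: e. Qed.

Lemma core (c a b : R) (Z x y t : Omega -> R) : (0 < c)%R ->
  measurable_fun setT Z -> measurable_fun setT y ->
  P.-integrable setT (fun w => (Z w ^+ 2)%:E) ->
  P.-integrable setT (fun w => (y w ^+ 2)%:E) ->
  (forall w, x w = a + Z w)%R -> (forall w, t w = b + c * Z w)%R ->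
  \int[P]_w (hfun c a b (y w))%:E = \int[P]_w (hfun c a b (t w))%:E ->
  [/\ P.-integrable setT (fun w => ((x w - y w) ^+ 2)%:E),
      P.-integrable setT (fun w => ((x w - t w) ^+ 2)%:E),
      P.-integrable setT (fun w => ((c * (x w - a) - (y w - b)) ^+ 2 / c)%:E) &
      \int[P]_w ((x w - y w) ^+ 2)%:E =
      \int[P]_w ((x w - t w) ^+ 2)%:E +
      \int[P]_w ((c * (x w - a) - (y w - b)) ^+ 2 / c)%:E].
Proof.
move=> c0 mZ my iZ iy hx ht hh.
have c0' : c != 0%R by rewrite gt_eqF.
have ihy : P.-integrable setT (fun w => (hfun c a b (y w))%:E).
  apply: (eqi (poly_integrable
      ((1 - c^-1) * b ^+ 2 + 2 * (a - b) * b)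
      (- 2 * (1 - c^-1) * b - 2 * (a - b)) (1 - c^-1) my iy))%R => w.
  by rewrite /hfun; congr EFin; ring.
have iht : P.-integrable setT (fun w => (hfun c a b (t w))%:E).
  apply: (eqi (poly_integrable
      ((1 - c^-1) * 0 ^+ 2 - 2 * (a - b) * 0)
      (- 2 * (a - b) * c) ((1 - c^-1) * c ^+ 2) mZ iZ))%R => w.
  by rewrite /hfun ht; congr EFin; ring.
have iA : P.-integrable setT (fun w => ((x w - t w) ^+ 2)%:E).
  apply: (eqi (poly_integrable
      ((a - b) ^+ 2) (2 * (a - b) * (1 - c)) ((1 - c) ^+ 2) mZ iZ))%R => w.
  by rewrite hx ht; congr EFin; ring.
have ix2 : P.-integrable setT (fun w => (x w ^+ 2)%:E).
  apply: (eqi (poly_integrable (a ^+ 2) (2 * a) 1 mZ iZ))%R => w.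
  by rewrite hx; congr EFin; ring.
have mx : measurable_fun setT x.
  rewrite (_ : x = fun w => a + Z w)%R; last exact: funext.
  exact: measurable_funD.
have iF : P.-integrable setT (fun w => ((x w - y w) ^+ 2)%:E).
  have iB : P.-integrable setT (fun w => (2 * x w ^+ 2)%:E + (2 * y w ^+ 2)%:E).
    by apply: integrableD => //; under eq_fun do rewrite EFinM; exact: integrableZl.
  apply: (le_integrable _ _ _ iB) => //.
    apply/measurable_EFinP; apply: measurable_funX; exact: measurable_funB.
  move=> w _; rewrite -EFinD !abse_EFin lee_fin.
  rewrite !ger0_norm ?sqr_ge0 //; last by rewrite addr_ge0 // mulr_ge0 // sqr_ge0.
  have := sqr_ge0 (x w + y w)%R; nra.
have HG : forall w, ((c * (x w - a) - (y w - b)) ^+ 2 / c)%:E =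
    ((x w - y w) ^+ 2)%:E - (((x w - t w) ^+ 2)%:E +
     ((hfun c a b (y w))%:E - (hfun c a b (t w))%:E)).
  move=> w; rewrite -!EFinB; congr EFin; rewrite /hfun ht hx; field; exact: c0'.
have iH : P.-integrable setT (fun w =>
    (hfun c a b (y w))%:E - (hfun c a b (t w))%:E) by exact: integrableB.
have iAH : P.-integrable setT (fun w =>
    ((x w - t w) ^+ 2)%:E + ((hfun c a b (y w))%:E - (hfun c a b (t w))%:E)).
  exact: integrableD.
have iG : P.-integrable setT (fun w => ((c * (x w - a) - (y w - b)) ^+ 2 / c)%:E).
  by apply: (eqi (integrableB measurableT iF iAH)) => w0; rewrite HG.
split => //.
rewrite (eq_integral (fun w => ((x w - t w) ^+ 2)%:E +
    (((hfun c a b (y w))%:E - (hfun c a b (t w))%:E) +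
     ((c * (x w - a) - (y w - b)) ^+ 2 / c)%:E))); last first.
  move=> w _; rewrite -!EFinB -!EFinD; congr EFin; rewrite /hfun ht hx; field; exact: c0'.
rewrite integralD //; last exact: integrableD.
rewrite integralD //.
have -> : \int[P]_w ((hfun c a b (y w))%:E - (hfun c a b (t w))%:E) = 0.
  have := integralB measurableT ihy iht; rewrite /= => ->.
  by rewrite hh subee //; exact: integrable_fin_num.
by rewrite add0e.
Qed.
End CORE.
Section GV2.
Context {R : realType} {n : nat} {d : measure_display} {Omega : measurableType d}.
Variable P : probability Omega R.
Local Open Scope ereal_scope.
Variables (D : 'M[R]_n) (E : Omega -> 'cV[R]_n) (sg : R).
Hypotheses (hD : is_diag_mx D) (hDp : forall i, (0 < D i i)%R) (hsg : (0 < sg)%R)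
  (hE : gaussian_vec P E 0 (sg ^+ 2 *: D)).

Lemma gauss_ae0 (v : 'cV[R]_n) (k : R) : (0 < k)%R ->
  \int[P]_w ((lin v (E w)) ^+ 2 / k)%:E = 0 -> v = 0%R.
Proof.
move=> k0 hi; apply/eqP/negP => /negP v0.
have [s0 hl] := gauss_law hD hDp hsg hE v0.
have mL : measurable_fun setT (fun w => lin v (E w)) by apply: lin_meas; case: hE.
have mf : measurable_fun setT (fun w => ((lin v (E w)) ^+ 2 / k)%:E).
  apply/measurable_EFinP; apply: measurable_funM => //; exact: measurable_funX.
have := (ae_eq_integral_abs P measurableT mf).1.
rewrite (eq_integral (fun w => ((lin v (E w)) ^+ 2 / k)%:E)); last first.
  move=> w _; rewrite gee0_abs // lee_fin; apply: divr_ge0; [exact: sqr_ge0|exact: ltW].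
move=> /(_ hi) [N [mN PN0 sub]].
pose S0 := (fun w => lin v (E w)) @^-1` [set 0%R].
have mS0 : measurable S0.
  by have := mL measurableT [set 0%R] (measurable_set1 _); rewrite setTI.
have PS0 : P S0 = 0.
  rewrite /S0 hl; last exact: measurable_set1.
  have := (null_content_dominatesP _ _).1 (normal_prob_dominates 0 (Num.sqrt (sg ^+ 2 * qD D v))).
  move=> h; apply: h; first exact: measurable_set1.
  exact: lebesgue_measure_set1.
have sub2 : [set: Omega] `<=` S0 `|` N.
  move=> w _; have [Nw|Nw] := pselect (N w); first by right.
  left; rewrite /S0 /=.
  have : ~ ([set: Omega] w -> ((lin v (E w)) ^+ 2 / k)%:E = cst 0 w) -> N w by exact: sub.
  move=> h; have /= := contra_not h Nw.
  move=> /contrapT /(_ I) [] /eqP; rewrite mulf_eq0 invr_eq0 (gt_eqF k0) orbF sqrf_eq0.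
  by move/eqP.
have := le_measure P (mem_set measurableT) (mem_set (measurableU _ _ mS0 mN)) sub2.
move=> h1; rewrite /= probability_setT in h1.
have := le_trans h1 (@measureU2 _ _ _ P S0 N mS0 mN).
move=> /= h; move: PS0 PN0 h => -> ->.
by rewrite adde0 lee_fin ler10.
Qed.
End GV2.
Section LA2.
Context {R : realType} {n : nat}.

Lemma linDl (u1 u2 x : 'cV[R]_n) : lin (u1 + u2) x = lin u1 x + lin u2 x.
Proof. by rewrite /lin -big_split; apply: eq_bigr => i _; rewrite mxE mulrDl. Qed.

Lemma linBl (u1 u2 x : 'cV[R]_n) : lin (u1 - u2) x = lin u1 x - lin u2 x.
Proof.
rewrite linDl (_ : - u2 = (-1) *: u2) ?linZl; first by rewrite mulN1r.
by rewrite scaleN1r.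
Qed.

Lemma mul_delta_col (M : 'M[R]_n) (i j : 'I_n) : (M *m (delta_mx i (0 : 'I_1) : 'cV[R]_n)) j 0 = M j i.
Proof.
rewrite mxE (bigD1 i) //= big1 ?addr0; first by rewrite mxE !eqxx mulr1.
by move=> k ki; rewrite mxE (negbTE ki) mulr0.
Qed.
End LA2.

Section GS2.
Context {R : realType} {d : measure_display} {Omega : measurableType d}.
Variable P : probability Omega R.
Local Open Scope ereal_scope.

Lemma poly_shift (Z : Omega -> R) (m k0 k1 k2 : R) :
  measurable_fun setT Z -> P.-integrable setT (fun w => (Z w ^+ 2)%:E) ->
  P.-integrable setT (fun w => (k0 + k1 * (m + Z w) + k2 * (m + Z w) ^+ 2)%:E).
Proof.
move=> mZ iZ.
apply: (eq_integrable _ (fun w => ((k0 + k1 * m + k2 * m ^+ 2) + (k1 + 2 * k2 * m) * Z w + k2 * Z w ^+ 2)%:E)) => //.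
  by move=> w _; congr EFin; ring.
exact: poly_integrable.
Qed.

Lemma measurable_hfun (c a b : R) : measurable_fun [set: R] (hfun c a b).
Proof.
rewrite /hfun; apply: measurable_funB; apply: measurable_funM => //.
  by apply: measurable_funX; exact: measurable_funB.
exact: measurable_funB.
Qed.
End GS2.
Unset Implicit Arguments.

Theorem mainTheorem7 (R : realType) (n : nat) (A D : 'M[R]_n)
  (mu : bool -> 'cV[R]_n) (sigma : bool -> R)
  (d : measure_display) (Omega : measurableType d) (P : probability Omega R)
  (eps X : bool -> Omega -> 'cV[R]_n) :
  (1%:M - A) \in unitmx ->
  (forall s, 0 < sigma s) ->
  is_diag_mx D -> (forall i, 0 < D i i) ->
  (forall s, gaussian_vec P (eps s) 0 (sigma s ^+ 2 *: D)) ->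
  (forall s w, X s w = mu s + A *m X s w + eps s w) ->
  let B := invmx (1%:M - A) in
  forall s : bool,
    let s' := ~~ s in
    let c := sigma s' / sigma s in
    let xCF := fun x : 'cV[R]_n => B *m mu s' + c *: (x - B *m mu s) in
    let T := fun (W : 'M[R]_n) (x : 'cV[R]_n) => B *m mu s' + W *m (x - B *m mu s) in
    (forall W : 'M[R]_n, is_OT_map P (X s) (X s') (T W) <-> W = c%:M) /\
    (forall x : 'cV[R]_n, T (c%:M) x = xCF x).
Proof.
move=> hU hsig hD hDp heps hX B s s' c xCF T.
have hc : 0 < c by rewrite divr_gt0.
have hc0 : c != 0 by rewrite gt_eqF.
have rveps : forall r, rvec (eps r) by move=> r; case: (heps r).
have hXB : forall r w, X r w = B *m (mu r + eps r w).
  move=> r w; have e : (1%:M - A) *m X r w = mu r + eps r w.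
    by rewrite mulmxBl mul1mx {1}(hX r w) addrAC addrK.
  by rewrite -e /B mulKmx.
have linX : forall r u w, lin u (X r w) = lin u (B *m mu r) + lin (B^T *m u) (eps r w).
  by move=> r u w; rewrite hXB mulmxDr linD [lin u (B *m eps r w)]lin_mulmx.
have linT : forall W u w, lin u (T W (X s w)) =
    lin u (B *m mu s') + lin (B^T *m (W^T *m u)) (eps s w).
  move=> W u w; rewrite /T.
  have -> : X s w - B *m mu s = B *m eps s w by rewrite hXB mulmxDr addrC addKr.
  by rewrite linD [lin u (W *m _)]lin_mulmx [lin (W^T *m u) _]lin_mulmx.
have mX : forall r i, measurable_fun setT (fun w => X r w i 0).
  move=> r i; rewrite (_ : (fun w => _) = fun w =>
     lin (delta_mx i 0) (B *m mu r) + lin (B^T *m delta_mx i 0) (eps r w)).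
    by apply: measurable_funD => //; exact: lin_meas.
  by apply: funext => w; rewrite -linX lin_delta.
have mT : forall W i, measurable_fun setT (fun w => T W (X s w) i 0).
  move=> W i; rewrite (_ : (fun w => _) = fun w =>
     lin (delta_mx i 0) (B *m mu s') + lin (B^T *m (W^T *m delta_mx i 0)) (eps s w)).
    by apply: measurable_funD => //; exact: lin_meas.
  by apply: funext => w; rewrite -linT lin_delta.
have rvX : forall r, rvec (X r) by move=> r i; exact: mX.
have rvT : forall W, rvec (T W \o X s) by move=> W i; exact: mT.
have linTc : forall u w, lin u (T c%:M (X s w)) =
    lin u (B *m mu s') + lin (c *: (B^T *m u)) (eps s w).
  by move=> u w; rewrite linT tr_scalar_mx mul_scalar_mx scalemxAr.
have slc : same_law P (T c%:M \o X s) (X s').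
  split; first exact: rvT; split; first exact: rvX.
  move=> u Am mA /=.
  rewrite (_ : (fun w => lin u (T c%:M (X s w))) = fun w =>
     lin u (B *m mu s') + lin (c *: (B^T *m u)) (eps s w)); last first.
    by apply: funext => w; rewrite linTc.
  rewrite (_ : (fun w => lin u (X s' w)) = fun w =>
     lin u (B *m mu s') + lin (B^T *m u) (eps s' w)); last first.
    by apply: funext => w; rewrite linX.
  set v := B^T *m u; set k := lin u (B *m mu s').
  have [->|v0] := eqVneq v 0.
    rewrite scaler0; congr (P _); apply/seteqP; split => w /=; by rewrite !lin0l.
  have cv0 : c *: v != 0 by rewrite scaler_eq0 negb_or hc0 v0.
  have [_ h1] := gauss_law hD hDp (hsig s) (heps s) cv0.
  have [_ h2] := gauss_law hD hDp (hsig s') (heps s') v0.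
  have mAk : measurable ((fun x => k + x) @^-1` Am).
    have := (measurable_funD (measurable_cst k) (@measurable_id _ R setT)) measurableT Am mA.
    by rewrite setTI.
  have e1 : (fun w => k + lin (c *: v) (eps s w)) @^-1` Am =
     (fun w => lin (c *: v) (eps s w)) @^-1` ((fun x => k + x) @^-1` Am) by [].
  have e2 : (fun w => k + lin v (eps s' w)) @^-1` Am =
     (fun w => lin v (eps s' w)) @^-1` ((fun x => k + x) @^-1` Am) by [].
  rewrite e1 e2.
  rewrite (h1 _ mAk) (h2 _ mAk).
  have -> : sigma s ^+ 2 * qD D (c *: v) = sigma s' ^+ 2 * qD D v.
    rewrite qD_scale mulrA; congr (_ * _).
    have := hsig s; rewrite /c => h0; field; exact: lt0r_neq0.
  by [].
have lawc : forall (Y1 Y2 : Omega -> 'cV[R]_n), same_law P Y1 Y2 -> forall (i : 'I_n) Am,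
    measurable Am -> P ((fun w => Y1 w i 0) @^-1` Am) = P ((fun w => Y2 w i 0) @^-1` Am).
  move=> Y1 Y2 [_ [_ hl]] i Am mA; have := hl (delta_mx i 0) Am mA.
  rewrite (_ : (fun w => lin (delta_mx i 0) (Y1 w)) = fun w => Y1 w i 0); last first.
    by apply: funext => w; rewrite lin_delta.
  rewrite (_ : (fun w => lin (delta_mx i 0) (Y2 w)) = fun w => Y2 w i 0) //.
  by apply: funext => w; rewrite lin_delta.
have coreS : forall S, same_law P (S \o X s) (X s') -> forall i : 'I_n,
  [/\ P.-integrable setT (fun w => ((X s w i 0 - S (X s w) i 0) ^+ 2)%:E),
      P.-integrable setT (fun w => ((X s w i 0 - T c%:M (X s w) i 0) ^+ 2)%:E),
      P.-integrable setT (fun w => ((c * (X s w i 0 - (B *m mu s) i 0) -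
            (S (X s w) i 0 - (B *m mu s') i 0)) ^+ 2 / c)%:E) &
      (\int[P]_w ((X s w i 0 - S (X s w) i 0) ^+ 2)%:E =
      \int[P]_w ((X s w i 0 - T c%:M (X s w) i 0) ^+ 2)%:E +
      \int[P]_w ((c * (X s w i 0 - (B *m mu s) i 0) -
            (S (X s w) i 0 - (B *m mu s') i 0)) ^+ 2 / c)%:E)%E].
  move=> S hS i.
  have [rS _] := hS.
  set Z := fun w => lin (B^T *m delta_mx i 0) (eps s w).
  set Zy := fun w => lin (B^T *m delta_mx i 0) (eps s' w).
  have hYi : forall w, X s' w i 0 = (B *m mu s') i 0 + Zy w.
    by move=> w; rewrite -lin_delta linX lin_delta.
  have mZ : measurable_fun setT Z by exact: lin_meas.
  have mZy : measurable_fun setT Zy by exact: lin_meas.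
  have iZ := gauss_sq hD hDp (hsig s) (heps s) (B^T *m delta_mx i 0).
  have iZy := gauss_sq hD hDp (hsig s') (heps s') (B^T *m delta_mx i 0).
  have my : measurable_fun setT (fun w => S (X s w) i 0) by exact: rS.
  have lawy := lawc _ _ hS i.
  have lawt := lawc _ _ slc i.
  have iY2 : P.-integrable setT (fun w => (X s' w i 0 ^+ 2)%:E).
    apply: (eqi (poly_shift ((B *m mu s') i 0) 0 0 1 mZy iZy)) => w.
    by rewrite hYi; congr EFin; ring.
  have [iy2 _] := law_transfer my (mX s' i) (exprn_measurable 2) lawy iY2.
  have ihY : P.-integrable setT (fun w =>
      (hfun c ((B *m mu s) i 0) ((B *m mu s') i 0) (X s' w i 0))%:E).
    apply: (eqi (poly_shift ((B *m mu s') i 0)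
       ((1 - c^-1) * ((B *m mu s') i 0) ^+ 2 + 2 * ((B *m mu s) i 0 - (B *m mu s') i 0) * (B *m mu s') i 0)
       (- 2 * (1 - c^-1) * (B *m mu s') i 0 - 2 * ((B *m mu s) i 0 - (B *m mu s') i 0))
       (1 - c^-1) mZy iZy)) => w.
    by rewrite hYi /hfun; congr EFin; ring.
  have [_ e1] := law_transfer my (mX s' i) (measurable_hfun _ _ _) lawy ihY.
  have [_ e2] := law_transfer (mT c%:M i) (mX s' i) (measurable_hfun _ _ _) lawt ihY.
  apply: (core hc mZ my iZ iy2).
  - by move=> w; rewrite -lin_delta linX lin_delta.
  - by move=> w; rewrite -lin_delta linTc lin_delta linZl.
  - by rewrite e1 e2.
have costE : forall S, same_law P (S \o X s) (X s') -> transport_cost P (X s) S =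
    (\sum_(i < n) \int[P]_w ((X s w i 0 - S (X s w) i 0) ^+ 2)%:E)%E.
  move=> S hS; rewrite /transport_cost /sqdist.
  under eq_integral do rewrite -sumEFin.
  rewrite integral_sum //.
  by move=> i; have [] := coreS S hS i.
have costS : forall S, same_law P (S \o X s) (X s') -> transport_cost P (X s) S =
    (\sum_(i < n) \int[P]_w ((X s w i 0 - T c%:M (X s w) i 0) ^+ 2)%:E +
     \sum_(i < n) \int[P]_w ((c * (X s w i 0 - (B *m mu s) i 0) -
            (S (X s w) i 0 - (B *m mu s') i 0)) ^+ 2 / c)%:E)%E.
  move=> S hS; rewrite costE // -big_split /=; apply: eq_bigr => i _.
  by have [] := coreS S hS i.
have Gge0 : forall (S : 'cV[R]_n -> 'cV[R]_n) (i : 'I_n), (0 <= \int[P]_w ((c * (X s w i 0 - (B *m mu s) i 0) -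
            (S (X s w) i 0 - (B *m mu s') i 0)) ^+ 2 / c)%:E)%E.
  move=> S i; apply: integral_ge0 => w _; rewrite lee_fin.
  by apply: divr_ge0; [exact: sqr_ge0 | exact: ltW].
have costc : transport_cost P (X s) (T c%:M) =
    (\sum_(i < n) \int[P]_w ((X s w i 0 - T c%:M (X s w) i 0) ^+ 2)%:E)%E by rewrite costE.
have finA : (\sum_(i < n) \int[P]_w ((X s w i 0 - T c%:M (X s w) i 0) ^+ 2)%:E)%E \is a fin_num.
  apply/sum_fin_numP => i _ _; apply: integrable_fin_num => //.
  by have [] := coreS _ slc i.
split; last by move=> x; rewrite /T /xCF mul_scalar_mx.
move=> W; split; last first.
  move=> ->; split; first exact: slc.
  move=> S hS; rewrite costc (costS _ hS); apply: leeDl.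
  by apply: sume_ge0 => i _; exact: Gge0.
case=> hS hopt.
have := hopt _ slc; rewrite costc (costS _ hS).
rewrite -[X in (_ <= X)%E]adde0 leeD2lE // => hle.
have G0 : forall i : 'I_n, (\int[P]_w ((c * (X s w i 0 - (B *m mu s) i 0) -
            (T W (X s w) i 0 - (B *m mu s') i 0)) ^+ 2 / c)%:E = 0)%E.
  move=> i; apply/eqP; rewrite eq_le Gge0 andbT.
  apply: (le_trans _ hle); rewrite (bigD1 i) //=; apply: leeDl.
  by apply: sume_ge0 => j _; exact: Gge0.
have v0 : forall i : 'I_n, B^T *m (c *: (delta_mx i (0 : 'I_1) : 'cV[R]_n) -
     W^T *m (delta_mx i (0 : 'I_1) : 'cV[R]_n)) = 0.
  move=> i; apply: (gauss_ae0 hD hDp (hsig s) (heps s) hc).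
  apply: (etrans _ (G0 i)); apply: eq_integral => w _; congr EFin; congr (_ ^+ 2 / c).
  rewrite -[X s w i 0]lin_delta -[T W (X s w) i 0]lin_delta linX linT.
  rewrite mulmxBr linBl -scalemxAr linZl.
  rewrite (_ : (B *m mu s) i 0 = lin (delta_mx i 0) (B *m mu s)); last by rewrite lin_delta.
  rewrite (_ : (B *m mu s') i 0 = lin (delta_mx i 0) (B *m mu s')); last by rewrite lin_delta.
  ring.
have hBT : B^T \in unitmx by rewrite unitmx_tr unitmx_inv.
apply/matrixP => i j.
have := congr1 (mulmx (invmx B^T)) (v0 i); rewrite mulKmx // mulmx0.
move=> /eqP; rewrite subr_eq0 => /eqP /esym /(congr1 (fun M : 'cV[R]_n => M j 0)).
rewrite mul_delta_col !mxE => ->.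
by rewrite eq_sym; case: (i == j); rewrite ?mulr1 ?mulr0.
Qed.
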